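(* Let $G$ be a simple loopless graph on $[L]$ and $p\ge1$. The map $\Phi_p:\Pi_{2p}(G)\to\mathcal{P}_{2p}(G)$ is surjective.
   Context: $\mathcal{T}(G)=\langle v\in[L]: uv=vu \text{ for } (u,v)\in E(G)\rangle$ is the trace monoid of $G$, $e$ the empty word. Words are adjacent, $w_1\leftrightarrow w_2$, if $w_1=vw_2$ or $w_2=vw_1$ for a letter $v$. $\mathcal{P}_{2p}(G)=\{w\in\mathcal{T}(G)^{2p}: e\leftrightarrow w_1\leftrightarrow\cdots\leftrightarrow w_{2p}=e\}$. $P_2(2p)$ is the set of pair partitions of $[2p]$; blocks $\{u_1,v_1\},\{u_2,v_2\}$ cross if $u_1<u_2<v_1<v_2$; $F_\pi$ is the graph on the blocks of $\pi$ with edges between crossing blocks. $\Pi_{2p}(G)=\{(\pi,\phi):\pi\in P_2(2p),\ \phi\in\operatorname{Hom}(F_\pi,G)\}$. Definition of $\Phi_p$ (it takes values in $\mathcal{P}_{2p}(G)$): (1) For $p=1$, if $\phi$ assigns label $i$ to the block $\{1,2\}$, $\Phi_1(\pi,\phi)=(i,e)$. (2) Given $\Phi_p$ and $(\pi,\phi)\in\Pi_{2(p+1)}(G)$, let $r$ be the smallest index that is the larger element of its block, $U=\{s,r\}\in\pi$ with $s<r$, $i_s=\phi(U)$, $\sigma=\pi\setminus\{U\}$, $\psi=\phi|_\sigma$. Identify $P_2([2(p+1)]\setminus\{s,r\})$ with $P_2(2p)$ via the order-preserving bijection, write $u=\Phi_p(\sigma,\psi)=(u_k)_{k\in[2(p+1)]\setminus\{s,r\}}$,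 and let $u_{k^-}$ be $u_j$ for the largest $j<k$, $j\notin\{s,r\}$, or $e$ if none exists. Then $\Phi_{p+1}(\pi,\phi)_k=u_k$ for $k<s$; $i_su_{s^-}$ for $k=s$; $i_su_k$ for $s<k<r$; $u_{r^-}$ for $k=r$; $u_k$ for $k>r$. *)

(* Defs.v *)
From mathcomp Require Import all_boot.
From Stdlib Require Import Relations.
Set Implicit Arguments. Unset Strict Implicit. Unset Printing Implicit Defensive.

(* The graph G on [L] is a relation on 'I_L
   (vertex i stands for i+1).  Traces of T(G) are represented by words
   (seq 'I_L) modulo the congruence generated by commuting adjacent letters
   joined by an edge of G. *)

Section Defs.
Variables (L : nat) (G : rel 'I_L).

Definition word := seq 'I_L.

Definition swap_step (w1 w2 : word) : Prop :=
  exists a b (x y : 'I_L), G x y /\ w1 = a ++ x :: y :: b /\ w2 = a ++ y :: x :: b.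

Definition traceeq : word -> word -> Prop :=
  clos_refl_sym_trans word swap_step.

Definition tadj (w1 w2 : word) : Prop :=
  exists v : 'I_L, traceeq w1 (v :: w2) \/ traceeq w2 (v :: w1).

(* w = (w_1,...,w_{2p}) (as the list [w_1;...;w_{2p}]) belongs to P_{2p}(G):
   e <-> w_1 <-> ... <-> w_{2p} = e *)
Definition in_P (p : nat) (w : seq word) : Prop :=
  size w = p.*2 /\
  (forall k, k < p.*2 -> tadj (nth [::] ([::] :: w) k) (nth [::] w k)) /\
  traceeq (last [::] w) [::].

(* A labelled pair partition (pi, phi) is a list of blocks ((s, r), i):
   {s, r} is a block of pi with s < r and i = phi({s,r}) in [L]. *)
Definition block := ((nat * nat) * 'I_L)%type.

Definition bpos (bl : seq block) : seq nat :=
  flatten [seq [:: b.1.1; b.1.2] | b <- bl].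

Definition crossb (b1 b2 : block) : bool :=
  [&& b1.1.1 < b2.1.1, b2.1.1 < b1.1.2 & b1.1.2 < b2.1.2].

(* (pi, phi) in Pi_{2p}(G): pi is a pair partition of [2p] = {1,...,2p}
   and phi is a graph homomorphism F_pi -> G. *)
Definition in_Pi (p : nat) (bl : seq block) : Prop :=
  (forall b, b \in bl -> b.1.1 < b.1.2) /\
  perm_eq (bpos bl) (iota 1 p.*2) /\
  (forall b1 b2, b1 \in bl -> b2 \in bl -> crossb b1 b2 -> G b1.2 b2.2).

(* The recursive map Phi, on labelled pair partitions of an arbitrary finite
   set of positions (this realises the order-preserving identification in the
   paper).  The fuel n is the number of blocks. *)
Fixpoint PhiF (n : nat) (bl : seq block) : nat -> word :=
  match n with
  | 0 => fun _ => [::]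
  | n'.+1 =>
    match bl with
    | [::] => fun _ => [::]
    | [:: b] => fun k => if k == b.1.1 then [:: b.2] else [::]
    | b0 :: _ =>
      (* U = {s, r}: r is the smallest index that is the larger element of its block *)
      let U := nth b0 bl (find (fun b => all (fun c => b.1.2 <= c.1.2) bl) bl) in
      let s := U.1.1 in let r := U.1.2 in let i := U.2 in
      let sigma := rem U bl in
      let u := PhiF n' sigma in
      let prev k := let js := [seq j <- bpos sigma | j < k] in
                    if js is [::] then [::] else u (\max_(j <- js) j) in
      fun k => if k < s then u k
               else if k == s then i :: prev s
               else if k < r then i :: u k
               else if k == r then prev r
               else u k
    end
  end.

Definition Phi (p : nat) (bl : seq block) : seq word :=
  [seq PhiF (size bl) bl k | k <- iota 1 p.*2].

End Defs.

(* Main.v *)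
From Stdlib Require Import Relations.
Require Import Defs.
From mathcomp Require Import all_boot.
Set Implicit Arguments. Unset Strict Implicit. Unset Printing Implicit Defensive.

Section Trace.
Variables (L : nat) (G : rel 'I_L).
Hypothesis Gsym : symmetric G.
Hypothesis Glooples : irreflexive G.
Local Notation teq := (traceeq G).

Lemma teq_refl x : teq x x. Proof. exact: rst_refl. Qed.
Lemma teq_sym x y : teq x y -> teq y x. Proof. exact: rst_sym. Qed.
Lemma teq_trans x y z : teq x y -> teq y z -> teq x z. Proof. exact: rst_trans. Qed.

Lemma teq_cons a x y : teq x y -> teq (a :: x) (a :: y).
Proof.
elim=> {x y} [x y [c [d [u [v [Guv [-> ->]]]]]]|x|x y _ IH|x y z _ IH1 _ IH2].
- apply: rst_step; exists (a :: c), d, u, v; done.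
- exact: teq_refl.
- exact: teq_sym.
- exact: teq_trans IH1 IH2.
Qed.

Lemma teq_swap a b x : G a b -> teq (a :: b :: x) (b :: a :: x).
Proof. by move=> Gab; apply: rst_step; exists [::], x, a, b. Qed.

Lemma teq_perm x y : teq x y -> perm_eq x y.
Proof.
elim=> {x y} [x y [c [d [u [v [Guv [-> ->]]]]]]|x|x y _ IH|x y z _ IH1 _ IH2].
- by rewrite perm_cat2l -[u :: v :: d]/([:: u; v] ++ d) -[v :: u :: d]/([:: v; u] ++ d) perm_cat2r; apply/permP=> q /=; rewrite !addn0 addnC.
- exact: perm_refl.
- by rewrite perm_sym.
- exact: perm_trans IH1 IH2.
Qed.

Lemma teq_size x y : teq x y -> size x = size y.
Proof. by move/teq_perm/perm_size. Qed.

Lemma perm_cons_inj (a b : 'I_L) z : perm_eq (a :: z) (b :: z) -> a = b.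
Proof.
move/permP/(_ (pred1 a)) => /=; rewrite eqxx /=.
by case: eqP => // _ /eqP; rewrite eqn_add2r.
Qed.

Lemma teq_cons_inj (a b : 'I_L) z : teq (a :: z) (b :: z) -> a = b.
Proof. by move/teq_perm/perm_cons_inj. Qed.

Lemma teq_move v A B : all (G v) A -> teq (A ++ v :: B) (v :: A ++ B).
Proof.
elim: A => [|a A IH] /=; first by move=> _; exact: teq_refl.
case/andP=> Gva /IH h.
apply: teq_trans (teq_cons a h) _.
by apply: teq_swap; rewrite Gsym.
Qed.

Definition Qdec v Y X := exists A B, X = A ++ v :: B /\ all (G v) A /\ teq (A ++ B) Y.

Lemma Qdec_swap v Y X1 X2 : swap_step G X1 X2 -> Qdec v Y X1 -> Qdec v Y X2.
Proof.
case=> c [d [x [y [Gxy [-> ->]]]]] [A [B [eqX [GA eqY]]]].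
elim: c A Y eqX GA eqY => [|c0 c IH] [|a A] Y /=.
- case=> <- <- _ eqY; exists [:: y], d; split=> //; split.
    by rewrite /= Gxy.
  by [].
- case=> <- {a}; case: A => [|a A] /=.
    case=> <- <- {B}; case/andP=> Gvx _ eqY; exists [::], (x :: d); split=> //; split=> //.
  case=> <- eqd; case/and3P=> Gvx Gvy GA eqY; exists [:: y, x & A], B; split.
    by rewrite eqd.
  split; first by rewrite /= Gvx Gvy GA.
  by apply: teq_trans eqY; apply: teq_swap; rewrite Gsym.
- case=> <- <- _ eqY; exists [::], (c ++ [:: y, x & d]); split=> //; split=> //.
  apply: teq_trans eqY; apply: rst_step; exists c, d, y, x; split=> //; by rewrite Gsym.
- case=> <- eqX; case/andP=> Gva GA eqY.
  have [A2 [B2 [eq2 [GA2 eqY2]]]] := IH A _ eqX GA (teq_refl _).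
  exists (c0 :: A2), B2; split; first by rewrite eq2.
  split; first by rewrite /= Gva.
  by apply: teq_trans eqY; apply: teq_cons.
Qed.

Lemma swap_step_sym X1 X2 : swap_step G X1 X2 -> swap_step G X2 X1.
Proof.
case=> c [d [x [y [Gxy [-> ->]]]]]; exists c, d, y, x; split=> //; by rewrite Gsym.
Qed.

Lemma levi v Y X : teq (v :: Y) X -> Qdec v Y X.
Proof.
have H : forall X1 X2, teq X1 X2 -> (Qdec v Y X1 <-> Qdec v Y X2).
  move=> X1 X2; elim=> {X1 X2} [x y st|x|x y _ IH|x y z _ IH1 _ IH2].
  - split; first exact: Qdec_swap.
    by apply: Qdec_swap; apply: swap_step_sym.
  - by [].
  - by split; move/IH.
  - by split; [move/IH1/IH2|move/IH2/IH1].
move/H=> [h _]; apply: h; exists [::], Y; split=> //; split=> //; exact: teq_refl.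
Qed.

Lemma teq_cancel v X Y : teq (v :: X) (v :: Y) -> teq X Y.
Proof.
move/teq_sym/levi=> [A [B [eqX [GA eqY]]]].
case: A eqX GA eqY => [|a A] /=.
  by case=> ->.
by case=> -> _; rewrite Glooples.
Qed.

Lemma teq_key a Z v Y : teq (a :: Z) (v :: Y) ->
  (a = v /\ teq Z Y) \/ (G v a /\ exists Y2, teq Z (v :: Y2)).
Proof.
move/teq_sym/levi=> [A0 [B [eqX [GA eqY]]]].
case: A0 eqX GA eqY => [|a' A] /=.
  by case=> -> -> _ eqY; left.
case=> -> -> /andP [Gva GA] eqY; right; split=> //.
by exists (A ++ B); apply: teq_move.
Qed.

Definition prevP (P : seq nat) (W : nat -> word L) (k : nat) : word L :=
  let js := [seq j <- P | j < k] in if js is [::] then [::] else W (\max_(j <- js) j).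

Lemma max_in (js : seq nat) : js != [::] -> \max_(j <- js) j \in js.
Proof.
elim: js => // j js IH _; rewrite big_cons inE.
case: js IH => [|j' js'] IH; first by rewrite big_nil maxn0 eqxx.
have := IH isT; set M := \max_(_ <- _) _ => HM.
rewrite /maxn; case: ltnP => h; first by rewrite HM orbT.
by rewrite eqxx.

Qed.

Variant prevP_spec (P : seq nat) (W : nat -> word L) (k : nat) : word L -> Prop :=
 | PrevNone : (forall j, j \in P -> k <= j) -> prevP_spec P W k [::]
 | PrevSome m : m \in P -> m < k -> (forall j, j \in P -> j < k -> j <= m) ->
     prevP_spec P W k (W m).

Lemma prevPP P W k : prevP_spec P W k (prevP P W k).
Proof.
rewrite /prevP.
have Hin := @max_in [seq j <- P | j < k].
case E: [seq j <- P | j < k] Hin => [|j0 js] Hin.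
  apply: PrevNone => j jP; rewrite leqNgt; apply/negP => jk.
  have : j \in [seq j <- P | j < k] by rewrite mem_filter jk jP.
  by rewrite E.
have := Hin isT; rewrite -E mem_filter => /andP [mk mP].
apply: PrevSome => // j jP jk.
apply: (leq_bigmax_seq j) => //; by rewrite mem_filter jk jP.
Qed.

Lemma prevP_none P W k : (forall j, j \in P -> k <= j) -> prevP P W k = [::].
Proof.
move=> H; case: prevPP => // m mP mk _.
by have := H m mP; rewrite leqNgt mk.
Qed.

Lemma prevP_max P W k m : m \in P -> m < k -> (forall j, j \in P -> j < k -> j <= m) ->
  prevP P W k = W m.
Proof.
move=> mP mk H; case: prevPP => [H2|m' m'P m'k H2].
  by have := H2 m mP; rewrite leqNgt mk.
have e : m' = m by apply/eqP; rewrite eqn_leq H // H2.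
by rewrite e.
Qed.

Lemma prevP_mem P1 P2 W k : P1 =i P2 -> prevP P1 W k = prevP P2 W k.
Proof.
move=> e; case: (prevPP P2 W k) => [H|m mP mk H].
  by apply: prevP_none => j; rewrite e; apply: H.
by apply: prevP_max; rewrite ?e // => j; rewrite e; apply: H.
Qed.

Lemma prevP_teq P U W k : (forall j, j \in P -> j < k -> teq (U j) (W j)) ->
  teq (prevP P U k) (prevP P W k).
Proof.
move=> H; case: (prevPP P W k) => [H2|m mP mk H2].
  rewrite prevP_none //; exact: teq_refl.
by rewrite (prevP_max U mP mk H2); apply: H.
Qed.

Lemma prevP_same P W k k' : (forall j, j \in P -> (j < k) = (j < k')) ->
  prevP P W k = prevP P W k'.
Proof.
by move=> H; rewrite /prevP (eq_in_filter (a1 := fun j => j < k) (a2 := fun j => j < k')).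
Qed.

Lemma PhiF_cons n (U c : block L) s k : all (fun c => U.1.2 <= c.1.2) (c :: s) ->
  PhiF n.+1 (U :: c :: s) k =
  if k < U.1.1 then PhiF n (c :: s) k
  else if k == U.1.1 then U.2 :: prevP (bpos (c :: s)) (PhiF n (c :: s)) U.1.1
  else if k < U.1.2 then U.2 :: PhiF n (c :: s) k
  else if k == U.1.2 then prevP (bpos (c :: s)) (PhiF n (c :: s)) U.1.2
  else PhiF n (c :: s) k.
Proof.
move=> H.
rewrite [PhiF n.+1 _]/= /=.
rewrite leqnn.
move: H => /= ->.
by rewrite /= eqxx.
Qed.

Lemma teq_rem v X Y : teq X (v :: Y) -> teq X (v :: rem v X).
Proof.
move/teq_sym/levi=> [A [B [-> [GA _]]]].
have -> : rem v (A ++ v :: B) = A ++ B.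
  elim: A GA => [|a A IH] /=; first by rewrite eqxx.
  case/andP=> Gva /IH ->.
  by case: eqP => // eav; move: Gva; rewrite eav Glooples.
exact: teq_move.
Qed.

Lemma tadj_teq_l X X' Y : teq X X' -> tadj G X Y -> tadj G X' Y.
Proof.
move=> e [a [h|h]]; exists a.
  by left; apply: teq_trans (teq_sym e) h.
by right; apply: teq_trans h (teq_cons a e).
Qed.

Lemma addstep X Y : tadj G X Y -> ~~ (size Y < size X) -> exists a, teq Y (a :: X).
Proof.
move=> [a [h|h]] hs; last by exists a.
by move: hs; rewrite (teq_size h) /= ltnSn.
Qed.

Lemma remstep X Y : tadj G X Y -> size Y < size X -> exists a, teq X (a :: Y).
Proof.
move=> [a [h|h]] hs; first by exists a.
by move: hs; rewrite (teq_size h) /= ltnNge leqnSn.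
Qed.

Lemma size_filter_ltS (P : seq nat) m : uniq P ->
  size [seq j <- P | j < m.+1] = size [seq j <- P | j < m] + (m \in P).
Proof.
move=> uP; rewrite !size_filter.
have -> : count (fun j => j < m.+1) P = count (predU (fun j => j < m) (pred1 m)) P.
  by apply: eq_count => j; rewrite /= ltnS leq_eqVlt orbC.
have h0 : count (predI (fun j => j < m) (pred1 m)) P = 0.
  apply/eqP; rewrite -leqn0 leqNgt -has_count; apply/hasPn => j _ /=.
  by apply/negP => /andP [h /eqP e]; move: h; rewrite e ltnn.
move: (count_predUI (fun j => j < m) (pred1 m) P); rewrite h0 addn0 => ->.
by rewrite (count_uniq_mem m uP).
Qed.

Lemma size_prev_adds P W : uniq P ->
  (forall k, k \in P -> size (W k) = (size (prevP P W k)).+1) ->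
  forall m, size (prevP P W m) = size [seq j <- P | j < m].
Proof.
move=> uP H; elim=> [|m IH].
  rewrite prevP_none //; have -> : [seq j <- P | j < 0] = [::] by elim: P {uP H}.
  by [].
rewrite size_filter_ltS //.
case: (boolP (m \in P)) => mP.
  rewrite (@prevP_max _ _ _ m) // ?H ?IH ?addn1 // => j _; by rewrite ltnS.
rewrite addn0 -IH; congr size; apply: prevP_same => j jP.
rewrite ltnS leq_eqVlt; case: eqP => // ejm; by rewrite -ejm jP in mP.
Qed.

Lemma levi_path P W v q : q \in P ->
  (forall k, k \in P -> k <= q -> exists a, teq (W k) (a :: prevP P W k)) ->
  forall Y, teq (W q) (v :: Y) ->
  exists s, [/\ s \in P, s <= q, teq (W s) (v :: prevP P W s) &
    forall k, k \in P -> s < k -> k <= q ->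
      (exists a, G v a /\ teq (W k) (a :: prevP P W k)) /\ (exists Y', teq (W k) (v :: Y'))].
Proof.
elim/ltn_ind: q => q IH qP adds Y WqY.
have [a Wa] := adds q qP (leqnn q).
have := teq_trans (teq_sym Wa) WqY; case/teq_key=> [[eav _]|[Gva [Y2 eY2]]].
  exists q; split=> //; first by rewrite -eav.
  by move=> k _ qk kq; have := leq_trans qk kq; rewrite ltnn.
move: eY2 Wa; case: (prevPP P W q) => [_ /teq_size/eqP //|m mP mq mmax eY2 Wa].
have [|s [sP sm Ws H]] := IH m mq mP _ Y2 eY2.
  by move=> k kP km; apply: adds => //; apply: leq_trans km (ltnW mq).
exists s; split=> //; first exact: leq_trans sm (ltnW mq).
move=> k kP sk kq; case: (leqP k m) => km; first exact: H.
have ekq : k = q.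
  apply/eqP; rewrite eqn_leq kq /=; rewrite leqNgt; apply/negP => kq'.
  by have := mmax k kP kq'; rewrite leqNgt km.
rewrite ekq (prevP_max W mP mq mmax); split; first by exists a; split.
exists (a :: Y2); apply: teq_trans Wa _.
apply: teq_trans (teq_cons a eY2) _; apply: teq_swap; by rewrite Gsym.
Qed.

Lemma bpos_mem (bl : seq (block L)) b : b \in bl -> (b.1.1 \in bpos bl) && (b.1.2 \in bpos bl).
Proof.
elim: bl => // c bl IH; rewrite inE => /orP [/eqP ->|/IH /andP [h1 h2]] /=.
  by rewrite !inE !eqxx orbT.
by rewrite !inE h1 h2 !orbT.
Qed.

Definition path_ok (P : seq nat) (W : nat -> word L) :=
  (forall k, k \in P -> tadj G (prevP P W k) (W k)) /\
  (forall m, (forall j, j \in P -> j < m) -> teq (prevP P W m) [::]).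

Definition good n (P : seq nat) (W : nat -> word L) (bl : seq (block L)) :=
  [/\ size bl = n, (forall b, b \in bl -> b.1.1 < b.1.2), perm_eq (bpos bl) P,
   (forall b1 b2, b1 \in bl -> b2 \in bl -> crossb b1 b2 -> G b1.2 b2.2) &
   [/\ forall k, k \in P -> teq (PhiF n bl k) (W k),
       forall b, b \in bl -> teq (W b.1.1) (b.2 :: prevP P W b.1.1) &
       forall b, b \in bl -> size (W b.1.2) < size (prevP P W b.1.2)]].

Section Step.
Variables (P : seq nat) (W : nat -> word L) (s r q : nat) (v : 'I_L).
Hypotheses (Puniq : uniq P) (sP : s \in P) (rP : r \in P) (qP : q \in P)
  (sq : s <= q) (qr : q < r)
  (qmax : forall j, j \in P -> j < r -> j <= q)
  (adds : forall k, k \in P -> k < r -> exists a, teq (W k) (a :: prevP P W k))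
  (Wq : teq (W q) (v :: W r))
  (Ws : teq (W s) (v :: prevP P W s))
  (mid : forall k, k \in P -> s < k -> k <= q ->
      (exists a, G v a /\ teq (W k) (a :: prevP P W k)) /\ (exists Y', teq (W k) (v :: Y'))).

Definition P' := [seq k <- P | (k != s) && (k != r)].
Definition W' k := if (s < k) && (k < r) then rem v (W k) else W k.

Lemma sr : s < r. Proof. exact: leq_ltn_trans sq qr. Qed.

Lemma memP' k : (k \in P') = [&& k \in P, k != s & k != r].
Proof. by rewrite mem_filter andbC. Qed.

Lemma W'_out k : ~~ ((s < k) && (k < r)) -> W' k = W k.
Proof. by rewrite /W' => /negbTE ->. Qed.

Lemma F4 k : k \in P -> s < k -> k < r -> teq (W k) (v :: W' k).
Proof.
move=> kP sk kr; rewrite /W' sk kr /=.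
have [_ [Y' h]] := mid kP sk (qmax kP kr).
exact: teq_rem h.
Qed.

Lemma prev'_le k : k <= s -> prevP P' W' k = prevP P W k.
Proof.
move=> ks; case: (prevPP P W k) => [H|m mP mk H].
  by apply: prevP_none => j; rewrite memP' => /and3P [jP _ _]; apply: H.
have ms : m < s by apply: leq_trans mk ks.
rewrite (@prevP_max _ _ _ m).
- by rewrite W'_out // negb_and -leqNgt ltnW.
- by rewrite memP' mP neq_ltn ms /= neq_ltn (ltn_trans ms sr).
- exact: mk.
by move=> j; rewrite memP' => /and3P [jP _ _]; apply: H.
Qed.

Lemma prev'_s k : s < k -> (forall j, j \in P -> j < k -> j <= s) ->
  prevP P' W' k = prevP P W s.
Proof.
move=> sk H; rewrite -(prev'_le (leqnn s)); apply: prevP_same => j.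
rewrite memP' => /and3P [jP js jr].
case: (ltnP j s) => h; first by rewrite (ltn_trans h sk).
apply/negbTE; rewrite -leqNgt; move: h.
rewrite leq_eqVlt eq_sym (negbTE js) /= => h.
by case: (ltnP j k) => // jk; have := H j jP jk; rewrite leqNgt h.
Qed.

Lemma F1 k : k \in P -> s < k -> k < r ->
  exists a, [/\ G v a, teq (W k) (a :: prevP P W k) & teq (W' k) (a :: prevP P' W' k)].
Proof.
move=> kP sk kr.
have [[a [Gva Wa]] _] := mid kP sk (qmax kP kr).
exists a; split=> //.
move: Wa; case: (prevPP P W k) => [H|m mP mk H Wa].
  by have := H s sP; rewrite leqNgt sk.
have sm : s <= m by apply: H.
have Gav : G a v by rewrite Gsym.
apply: (@teq_cancel v); apply: teq_trans (teq_sym (F4 kP sk kr)) _.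
move: sm; rewrite leq_eqVlt => /orP [/eqP esm|sm].
  rewrite (prev'_s sk); last by rewrite esm.
  rewrite -esm in Wa.
  apply: teq_trans Wa _; apply: teq_trans (teq_cons a Ws) _; exact: teq_swap.
rewrite (@prevP_max _ _ _ m).
- apply: teq_trans Wa _.
  apply: teq_trans (teq_cons a (F4 mP sm (ltn_trans mk kr))) _; exact: teq_swap.
- by rewrite memP' mP neq_ltn sm orbT /= neq_ltn (ltn_trans mk kr).
- exact: mk.
by move=> j; rewrite memP' => /and3P [jP _ _]; apply: H.
Qed.

Lemma F2 : teq (prevP P' W' r) (W r).
Proof.
move: sq; rewrite leq_eqVlt => /orP [/eqP esq|sq'].
  rewrite (prev'_s sr); last by rewrite esq.
  apply: (@teq_cancel v); apply: teq_trans (teq_sym Ws) _; by rewrite esq.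
rewrite (@prevP_max _ _ _ q).
- apply: (@teq_cancel v); apply: teq_trans (teq_sym (F4 qP sq' qr)) _; exact: Wq.
- by rewrite memP' qP neq_ltn sq' orbT /= neq_ltn qr.
- exact: qr.
by move=> j; rewrite memP' => /and3P [jP _ _]; apply: qmax.
Qed.

Lemma F3 k : r < k -> teq (prevP P' W' k) (prevP P W k).
Proof.
move=> rk; case: (prevPP P W k) => [H|m mP mk H].
  by have := H r rP; rewrite leqNgt rk.
have rm : r <= m by apply: H.
move: rm; rewrite leq_eqVlt => /orP [/eqP erm|rm].
  rewrite -erm; apply: teq_trans F2; rewrite (@prevP_same _ _ k r); first exact: teq_refl.
  move=> j; rewrite memP' => /and3P [jP js jr].
  case: (ltnP j r) => h; first by rewrite (ltn_trans h rk).
  apply/negbTE; rewrite -leqNgt; move: h.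
  rewrite leq_eqVlt eq_sym (negbTE jr) /= => h.
  by case: (ltnP j k) => // jk; have := H j jP jk; rewrite -erm leqNgt h.
rewrite (@prevP_max _ _ _ m).
- rewrite W'_out; first exact: teq_refl.
  by rewrite negb_and -!leqNgt (ltnW rm) orbT.
- by rewrite memP' mP neq_ltn (ltn_trans sr rm) orbT /= neq_ltn rm orbT.
- exact: mk.
by move=> j; rewrite memP' => /and3P [jP _ _]; apply: H.
Qed.


Lemma perm_P : perm_eq P (s :: r :: P').
Proof.
apply: uniq_perm => //.
  rewrite /= !memP' !inE eqxx /= andbF /= andbF /= filter_uniq // andbT.
  by rewrite memP' eqxx andbF orbF (ltn_eqF sr).
move=> k; rewrite !inE memP'.
case: (k =P s) => [->|ks] /=; first by rewrite sP.
case: (k =P r) => [->|kr] /=; first by rewrite rP.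
by rewrite andbT.
Qed.

Lemma path' : path_ok P W -> path_ok P' W'.
Proof.
case=> Hadj Hfin; split.
  move=> k; rewrite memP' => /and3P [kP ks kr].
  case: (ltngtP k s) => [kls|skl|eks]; last by rewrite eks eqxx in ks.
    rewrite prev'_le ?(ltnW kls) // W'_out; first exact: Hadj.
    by rewrite negb_and -leqNgt (ltnW kls).
  case: (ltngtP k r) => [klr|rkl|ekr]; last by rewrite ekr eqxx in kr.
    have [a [_ _ h]] := F1 kP skl klr; exists a; by right.
  rewrite W'_out; last by rewrite negb_and -!leqNgt (ltnW rkl) orbT.
  apply: tadj_teq_l (Hadj k kP); exact: teq_sym (F3 rkl).
move=> m Hm.
rewrite (@prevP_same _ _ m (maxn m r.+1)).
  apply: teq_trans (F3 _) _; first by rewrite leq_max leqnn orbT.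
  apply: Hfin => j jP; rewrite leq_max.
  case: (j =P s) => [->|js]; first by rewrite ltnS (ltnW sr) orbT.
  case: (j =P r) => [->|jr]; first by rewrite ltnS leqnn orbT.
  have -> : j < m by apply: Hm; rewrite memP'; apply/and3P; split=> //; apply/eqP.
  by [].
move=> j jP; have := Hm j jP; rewrite leq_max => ->.
by apply/esym; rewrite /=.
Qed.

Lemma size_add' k : k \in P' -> k < r -> size (W' k) = (size (prevP P' W' k)).+1.
Proof.
rewrite memP' => /and3P [kP ks kr] klr.
case: (ltngtP k s) => [kls|skl|eks]; last by rewrite eks eqxx in ks.
  rewrite prev'_le ?(ltnW kls) // W'_out; last by rewrite negb_and -leqNgt (ltnW kls).
  by have [a /teq_size ->] := adds kP klr.
by have [a [_ _ /teq_size ->]] := F1 kP skl klr.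
Qed.

Hypothesis Wr : size (W r) < size (prevP P W r).

Lemma step_good n (sg : seq (block L)) : good n P' W' sg ->
  good n.+1 P W (((s, r), v) :: sg).
Proof.
case=> sz slt pe cross [phi lab clo].
have clo_r : forall b, b \in sg -> r < b.1.2.
  move=> b bsg; have /andP [_ hb] := bpos_mem bsg.
  have hb' := hb; rewrite (perm_mem pe) in hb'.
  move: hb; rewrite (perm_mem pe) memP' => /and3P [bP bs br].
  rewrite ltnNge leq_eqVlt (negbTE br) /=; apply/negP => h.
  by have := clo b bsg; rewrite (size_add' hb' h) ltnNge leqnSn.
have lab_mid : forall b, b \in sg -> s < b.1.1 -> b.1.1 < r ->
    G v b.2 /\ teq (W b.1.1) (b.2 :: prevP P W b.1.1).
  move=> b bsg sb br; have /andP [hb _] := bpos_mem bsg.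
  have hb' := hb; rewrite (perm_mem pe) memP' in hb'; case/and3P: hb' => bP _ _.
  have [a [Gva Wa W'a]] := F1 bP sb br.
  have e : b.2 = a.
    apply: (@teq_cons_inj _ _ (prevP P' W' b.1.1)).
    exact: teq_trans (teq_sym (lab b bsg)) W'a.
  by rewrite e.
split.
- by rewrite /= sz.
- move=> b; rewrite inE => /orP [/eqP -> /=|]; [exact: sr| exact: slt].
- apply: (@perm_trans _ (s :: r :: P')); last by rewrite perm_sym perm_P.
  by rewrite /= !perm_cons.
- move=> b1 b2; rewrite !inE => /orP [/eqP ->|h1] /orP [/eqP ->|h2].
  + by rewrite /crossb /= ltnn.
  + by rewrite /crossb /= => /and3P [sb bsr _]; case: (lab_mid b2 h2 sb bsr).
  + by rewrite /crossb /= => /and3P [_ _ b1r]; have := clo_r b1 h1; rewrite ltnNge (ltnW b1r).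
  + exact: cross.
split.
- case: sg sz slt pe cross phi lab clo clo_r lab_mid => [|c sg'] sz slt pe cross phi lab clo clo_r lab_mid.
  + have P'nil : P' = [::] by apply/nilP; rewrite /nilp -(perm_size pe).
    have memP2 : forall j, j \in P -> (j == s) || (j == r).
      by move=> j; rewrite (perm_mem perm_P) P'nil !inE.
    have prev_s : prevP P W s = [::].
      apply: prevP_none => j /memP2 /orP [/eqP ->|/eqP ->] //; exact: ltnW sr.
    move=> k /memP2 /orP [/eqP ->|/eqP ->] /=.
      by rewrite eqxx; apply: teq_sym; rewrite -prev_s.
    rewrite eq_sym (ltn_eqF sr).
    have prev_r : prevP P W r = W s.
      apply: prevP_max => //; first exact: sr.
      move=> j /memP2 /orP [/eqP ->|/eqP ->] //; by rewrite ltnn.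
    move: Wr; rewrite prev_r (teq_size Ws) prev_s /= ltnS leqn0 => /nilP ->.
    exact: teq_refl.
  + have allr : all (fun b => ((s, r), v).1.2 <= b.1.2) (c :: sg').
      by apply/allP => b hb; rewrite /= ltnW ?clo_r.
    have hprev : forall k, teq (prevP (bpos (c :: sg')) (PhiF n (c :: sg')) k) (prevP P' W' k).
      move=> k; rewrite (prevP_mem _ _ (perm_mem pe)); apply: prevP_teq => j jP _.
      exact: phi.
    move=> k kP; rewrite PhiF_cons //=.
    case: (ltngtP k s) => [ks|sk|eks].
    * have <- : W' k = W k by apply: W'_out; rewrite negb_and -leqNgt (ltnW ks).
      by apply: phi; rewrite memP' kP /= neq_ltn ks /= neq_ltn (ltn_trans ks sr).
    * idtac.
      case: (ltngtP k r) => [kr|rk|ekr].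
      - apply: teq_trans (teq_cons v (phi k _)) (teq_sym (F4 kP sk kr)).
        by rewrite memP' kP neq_ltn sk orbT /= neq_ltn kr.
      - idtac.
        have <- : W' k = W k by apply: W'_out; rewrite negb_and -!leqNgt (ltnW rk) orbT.
        by apply: phi; rewrite memP' kP neq_ltn (ltn_trans sr rk) orbT /= neq_ltn rk orbT.
      - rewrite ekr; exact: teq_trans (hprev r) F2.
    * rewrite eks; apply: teq_sym; apply: teq_trans Ws _; apply: teq_cons.
      rewrite -(prev'_le (leqnn s)); exact: teq_sym (hprev s).
- move=> b; rewrite inE => /orP [/eqP -> /=|bsg]; first exact: Ws.
  have /andP [hb _] := bpos_mem bsg.
  move: hb; rewrite (perm_mem pe) memP' => /and3P [bP bs br].
  case: (ltngtP b.1.1 s) => [bls|sbl|ebs]; last by rewrite ebs eqxx in bs.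
    have := lab b bsg; rewrite W'_out ?prev'_le ?(ltnW bls) //.
    by rewrite negb_and -leqNgt (ltnW bls).
  case: (ltngtP b.1.1 r) => [blr|rbl|ebr]; last by rewrite ebr eqxx in br.
    by case: (lab_mid b bsg sbl blr).
  have := lab b bsg; rewrite W'_out; last by rewrite negb_and -!leqNgt (ltnW rbl) orbT.
  move=> h; apply: teq_trans h _; apply: teq_cons; exact: F3.
- move=> b; rewrite inE => /orP [/eqP -> /=|bsg]; first exact: Wr.
  have rb := clo_r b bsg.
  have := clo b bsg; rewrite W'_out; last by rewrite negb_and -!leqNgt (ltnW rb) orbT.
  by rewrite (teq_size (F3 rb)).
Qed.

End Step.


Theorem gen n : forall P W, uniq P -> size P = n.*2 -> path_ok P W ->
  exists bl, good n P W bl.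
Proof.
elim: n => [|n IH] P W uP szP pok.
  move/size0nil: szP => ->; exists [::]; split=> //; split=> //.
have pok' := pok; case: pok' => Hadj Hfin.
have exr : exists r, (r \in P) && (size (W r) < size (prevP P W r)).
  case: (boolP (has (fun r => size (W r) < size (prevP P W r)) P)) => [/hasP [r rP h]|/hasPn H].
    by exists r; rewrite rP h.
  have adds_all : forall k, k \in P -> size (W k) = (size (prevP P W k)).+1.
    by move=> k kP; have [a /teq_size ->] := addstep (Hadj k kP) (H k kP).
  set M := (\max_(j <- P) j).+1.
  have hall : forall j, j \in P -> j < M by move=> j jP; rewrite ltnS; apply: leq_bigmax_seq.
  have := size_prev_adds uP adds_all M.
  rewrite (teq_size (Hfin _ hall)).
  have -> : [seq j <- P | j < M] = P by apply/all_filterP/allP.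
  by rewrite szP.
case: (ex_minnP exr) => r /andP [rP Wr] rmin.
have adds : forall k, k \in P -> k < r -> exists a, teq (W k) (a :: prevP P W k).
  move=> k kP kr; apply: (addstep (Hadj k kP)); apply/negP => h.
  by have := rmin k; rewrite kP h => /(_ isT); rewrite leqNgt kr.
have [v Wv] := remstep (Hadj r rP) Wr.
move: Wv; case: (prevPP P W r) => [_ /teq_size/eqP //|q qP qr qmax Wq].
have [s [sP sq Ws mid]] := levi_path qP (fun k kP kq => adds k kP (leq_ltn_trans kq qr)) Wq.
have pe := perm_P uP sP rP sq qr.
have szP' : size (P' P s r) = n.*2.
  by move: (perm_size pe); rewrite szP /= doubleS => -[].
have [sg gsg] := IH (P' P s r) (W' W s r v) (filter_uniq _ uP) szP'
  (path' sP rP qP sq qr qmax Wq Ws mid pok).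
exists ((s, r, v) :: sg).
exact: (step_good uP sP rP qP sq qr qmax adds Wq Ws mid Wr gsg).
Qed.

End Trace.

Theorem lemma3p4 (L : nat) (G : rel 'I_L) (Gsym : symmetric G)
    (Gloopless : irreflexive G) (p : nat) (hp : 1 <= p) (w : seq (word L)) :
  in_P G p w ->
  exists bl : seq (block L),
    in_Pi G p bl /\
    (forall k, k < p.*2 -> traceeq G (nth [::] (Phi p bl) k) (nth [::] w k)).
Proof.
case=> szw [Hstep Hlast].
pose P := iota 1 p.*2.
pose W := fun k => nth [::] w k.-1.
have prevE : forall k, 0 < k -> k <= p.*2.+1 -> prevP P W k = nth [::] ([::] :: w) k.-1.
  move=> [|[|k]] // _ kle.
    by apply: prevP_none => j; rewrite mem_iota => /andP [].
  rewrite (@prevP_max _ _ _ _ k.+1) //.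
  by rewrite mem_iota /= add1n ltnS.
have pok : path_ok G P W.
  split.
    move=> k; rewrite mem_iota add1n => /andP [k1 k2].
    rewrite prevE ?(ltnW k2) //; case: k k1 k2 => // k _ k2.
    exact: Hstep.
  move=> m Hm.
  have p2 : p.*2 \in P by rewrite mem_iota add1n ltnSn andbT -addnn; case: (p) hp.
  rewrite (@prevP_max _ _ _ _ p.*2) //; last first.
  - by move=> j; rewrite mem_iota add1n ltnS => /andP [_ ->].
  - exact: Hm.
  rewrite /W -szw nth_last; exact: Hlast.
have [bl [szbl slt pe cross [phi _ _]]] := gen Gsym Gloopless (iota_uniq 1 p.*2) (size_iota 1 p.*2) pok.
exists bl; split; first by split.
move=> k kp.
rewrite /Phi (nth_map 0) ?size_iota // nth_iota // szbl add1n.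
  by apply: phi; rewrite mem_iota /= add1n ltnS.
Qed.
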